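(* Let $P$ be a finite bounded poset with minimum $\hat{0}$ and maximum $\hat{1}$, and let $h$ be a height function on $P$. Then $$\mathsf{Z}_{P,h}([-1]_q)=q^{-h(\hat{0})-h(\hat{1})}\,\mu_P(\hat{0},\hat{1}),$$ where $\mu_P$ is the Möbius function of $P$.
   Context: $q$ is an indeterminate; $[n]_q=(q^n-1)/(q-1)$ for $n\in\mathbb{Z}$ (so $[-1]_q=-q^{-1}$). A height function is $h:P\to\mathbb{N}$ with $h(x)<h(y)$ whenever $y$ covers $x$. For a tuple $a$ of $k$ distinct nonnegative integers, $\mathsf{E}_a\in\mathbb{Q}(q)[x]$ is the unique polynomial with $\mathsf{E}_a([n]_q)=\sum_{m\in\mathbb{N}^k,\sum m_i=n}q^{\sum a_im_i}$ for $n\ge0$. The $q$-Zeta polynomial is $\mathsf{Z}_{P,h}(x)=\sum_{k\ge1}\sum_{c_1<\cdots<c_k\text{ in }P}q^{\sum_i h(c_i)}\mathsf{E}_{(h(c_1),\dots,h(c_k))}((x-[k+1]_q)/q^{k+1})$; it is the unique polynomial with $\mathsf{Z}_{P,h}([n]_q)=\sum_{e_1\le\cdots\le e_{n-1}}q^{\sum_j h(e_j)}$ for all $n\ge2$. *)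

(* Defs.v *)
From HB Require Import structures.
From mathcomp Require Import all_boot all_order all_algebra.
From mathcomp Require Import fraction.
Set Implicit Arguments. Unset Strict Implicit. Unset Printing Implicit Defensive.
Import Order.TTheory GRing.Theory Num.Theory.

Definition Qq : fieldType := {fraction {poly rat}}.
Definition qvar : Qq := tofrac ('X : {poly rat}).

Definition qint (n : int) : Qq := ((qvar ^ n - 1) / (qvar - 1))%R.

Section Poset.
Context {disp : Order.disp_t} {P : finPOrderType disp}.
Local Open Scope order_scope.

Definition covers (x y : P) : bool :=
  (x < y) && [forall z : P, ~~ ((x < z) && (z < y))].

Definition is_height (h : P -> nat) : Prop :=
  forall x y : P, covers x y -> (h x < h y)%N.

(* Defined by recursion with fuel; fuel
   #|P| suffices since strict chains in P have at most #|P| elements. *)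
Fixpoint mobius_rec (n : nat) (x y : P) : int :=
  match n with
  | 0 => 0%R
  | n'.+1 =>
      if x == y then 1%R
      else if x <= y then
        (- \sum_(z : P | ((x <= z)%O && (z < y)%O)) mobius_rec n' x z)%R
      else 0%R
  end.
Definition mobius (x y : P) : int := mobius_rec #|P| x y.

Definition multichain_sum (h : P -> nat) (k : nat) : Qq :=
  (\sum_(e : k.-tuple P | sorted <=%O (tval e))
      qvar ^+ (\sum_(x <- tval e) h x)%N)%R.

Definition is_qZeta (h : P -> nat) (Z : {poly Qq}) : Prop :=
  forall n : nat, (2 <= n)%N -> Z.[qint n%:Z]%R = multichain_sum h n.-1.
End Poset.

(* Main.v *)
Require Import Defs.
From HB Require Import structures.
From mathcomp Require Import all_boot all_order all_algebra.
From mathcomp Require Import fraction ring.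
Set Implicit Arguments. Unset Strict Implicit. Unset Printing Implicit Defensive.
Import Order.TTheory GRing.Theory Num.Theory.
Local Open Scope ring_scope.


Lemma qX n : qvar ^+ n = tofrac ('X^n : {poly rat}).
Proof. by rewrite /qvar tofracXn. Qed.

Lemma qpow_inj a b : qvar ^+ a = qvar ^+ b -> a = b.
Proof.
rewrite !qX => /eqP; rewrite tofrac_eq => /eqP E.
by have := congr1 (fun p : {poly rat} => size p) E; rewrite !size_polyXn => -[].
Qed.

Lemma q_neq0 : qvar != 0.
Proof. by rewrite /qvar tofrac_eq0 polyX_eq0. Qed.

Lemma q_neq1 : qvar - 1 != 0.
Proof.
rewrite subr_eq0; apply/eqP => H.
have := @qpow_inj 1 0; rewrite expr0 expr1 => /(_ H) //.
Qed.

Lemma qpowz n : qvar ^ (n%:Z) = qvar ^+ n.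
Proof. by []. Qed.

Lemma qint_nat n : qint n%:Z = (qvar ^+ n - 1) / (qvar - 1).
Proof. by []. Qed.

Definition shiftp : {poly Qq} := (qvar - 1) *: 'X + 1.

Lemma shiftp_nat n : shiftp.[qint n%:Z] = qvar ^+ n.
Proof.
rewrite /shiftp qint_nat hornerD hornerZ hornerX hornerC mulrC -mulrA mulVf ?q_neq1 //.
by rewrite mulr1 subrK.
Qed.

Lemma shiftp_m1 : shiftp.[qint (-1)] = qvar ^-1.
Proof.
rewrite /shiftp /qint exprN1 hornerD hornerZ hornerX hornerC mulrC -mulrA mulVf ?q_neq1 //.
by rewrite mulr1 subrK.
Qed.

Lemma qint_inj a b : qint a%:Z = qint b%:Z -> a = b.
Proof.
move=> H; apply: qpow_inj; by rewrite -!shiftp_nat H.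
Qed.

Lemma poly_zero_on_qint (p : {poly Qq}) :
  (forall n, (2 <= n)%N -> p.[qint n%:Z] = 0) -> p = 0.
Proof.
move=> H; apply/eqP; apply/negPn/negP => pn0.
set rs := [seq qint (i + 2)%N%:Z | i <- iota 0 (size p)].
have Ha : all (root p) rs.
  by apply/allP => x /mapP [i _ ->]; apply/eqP/H; rewrite leq_addl.
have Hu : uniq rs.
  rewrite map_inj_uniq ?iota_uniq // => i j /qint_inj /eqP; rewrite eqn_add2r => /eqP.
  done.
by have := max_poly_roots pn0 Ha Hu; rewrite size_map size_iota ltnn.
Qed.

Lemma solve (b : nat) (G : {poly Qq}) (c : Qq) : (size G <= b)%N ->
  exists W : {poly Qq}, [/\ (size W <= b.+1)%N, W.[1] = c &
    forall t, W.[qvar * t] = qvar ^+ b * (W.[t] + G.[t])].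
Proof.
move=> sG.
pose S : {poly Qq} := \poly_(i < b) (qvar ^+ b * G`_i / (qvar ^+ i - qvar ^+ b)).
exists (S + (c - S.[1]) *: 'X^b); split.
- rewrite (leq_trans (size_polyD _ _)) // geq_max (leq_trans (size_poly _ _)) //=.
  by rewrite (leq_trans (size_scale_leq _ _)) // size_polyXn.
- by rewrite hornerD hornerZ hornerXn expr1n mulr1 addrC subrK.
move=> t.
rewrite !hornerD !hornerZ !hornerXn exprMn (horner_coef_wide _ sG).
have key : S.[qvar * t] = qvar ^+ b * S.[t] +
    qvar ^+ b * \sum_(i < b) G`_i * t ^+ i.
  rewrite !horner_poly !mulr_sumr -big_split /=; apply: eq_bigr => i _.
  have ne : qvar ^+ i - qvar ^+ b != 0.
    rewrite subr_eq0; apply/eqP => /qpow_inj E.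
    by have := ltn_ord i; rewrite E ltnn.
  set g := G`_i; set u := qvar ^+ i; set v := qvar ^+ b.
  rewrite exprMn -/u.
  have -> : v * g / (u - v) * (u * t ^+ i) = (v * g / (u - v) * (u - v)) * t ^+ i
     + v * (v * g / (u - v) * t ^+ i).
    by rewrite !mulrA; ring.
  by rewrite mulfVK //; ring.
rewrite key; ring.
Qed.

Section Pos.
Variables (disp : Order.disp_t) (P : finTBPOrderType disp) (h : P -> nat).
Hypothesis hh : is_height h.

Definition dn (y : P) : nat := #|[set z : P | (z < y)%O]|.

Lemma dn_lt (z y : P) : (z < y)%O -> (dn z < dn y)%N.
Proof.
move=> zy; apply: proper_card; apply/properP; split.
  by apply/subsetP => w; rewrite !inE => wz; apply: lt_trans wz zy.
by exists z; rewrite !inE ?ltxx.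
Qed.

Lemma dn_max (y : P) : (dn y < #|P|)%N.
Proof.
rewrite -cardsT; apply: proper_card; rewrite properT; apply/eqP => E.
by have : y \in [set: P] by []; rewrite -E inE ltxx.
Qed.

Lemma h_lt (z y : P) : (z < y)%O -> (h z < h y)%N.
Proof.
have [k] := ubnP (dn y - dn z); elim: k z y => [//|k IH] z y Hk zy.
case cov: (covers z y); first exact: hh.
move: cov; rewrite /covers zy /= => /negbT; rewrite negb_forall => /existsP [w].
rewrite negbK => /andP [zw wy].
have d1 := dn_lt zw; have d2 := dn_lt wy.
apply: (@ltn_trans (h w)); apply: IH => //; rewrite ltnS in Hk; apply: leq_trans Hk.
  by rewrite ltn_sub2r // (ltn_trans d1).
by rewrite ltn_sub2l // (ltn_trans d1).
Qed.

Lemma mob_stable n m (x y : P) : (dn y < n)%N -> (dn y < m)%N ->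
  mobius_rec n x y = mobius_rec m x y.
Proof.
elim: n m x y => [//|n IH] [//|m] x y Hn Hm /=.
case: eqP => // _; case: ifP => // _; congr (- _)%R; apply: eq_bigr => z /andP [_ zy].
have := dn_lt zy => dz; apply: IH; first exact: leq_trans dz Hn.
exact: leq_trans dz Hm.
Qed.

Lemma mobiusE (x y : P) : mobius x y =
  if x == y then 1%R else if (x <= y)%O then
    (- \sum_(z : P | ((x <= z)%O && (z < y)%O)) mobius x z)%R else 0%R.
Proof.
rewrite {1}/mobius; have := dn_max y; case E: #|P| => [//|n] Hy /=.
case: eqP => // _; case: ifP => // _; congr (- _)%R; apply: eq_bigr => z /andP [_ zy].
have Hz : (dn z < n)%N.
  by rewrite -ltnS -E; apply: leq_trans (dn_max y); rewrite ltnS; exact: dn_lt.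
by rewrite /mobius E; apply: mob_stable => //; apply: ltnW.
Qed.


Definition ge_rel : rel P := fun a b => (b <= a)%O.
Definition T k (y : P) : Qq := \sum_(e : k.-tuple P | sorted ge_rel e && all (fun x => (x <= y)%O) e)
   qvar ^+ (\sum_(x <- e) h x)%N.

Lemma ge_trans : transitive ge_rel.
Proof. by move=> a b c ba cb; rewrite /ge_rel (le_trans cb ba). Qed.

Lemma multi_T k : multichain_sum h k = T k \top%O.
Proof.
have ri : injective (@rev_tuple k P).
  by move=> a b /(congr1 val) /= /(congr1 rev); rewrite !revK => /val_inj.
rewrite /multichain_sum (reindex_inj ri) /T; apply: eq_big => [e|e _] /=.
  rewrite rev_sorted; have -> : all (fun x => (x <= \top)%O) e by apply/allP => x _; exact: lex1.
  by rewrite andbT.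
by rewrite big_rev.
Qed.

Lemma T0 y : T 0 y = 1.
Proof.
rewrite /T (big_pred1 [tuple]) => [|e]; first by rewrite big_nil expr0.
by rewrite tuple0 /=; apply/esym; apply/eqP.
Qed.

Lemma TS k y : T k.+1 y = \sum_(x | (x <= y)%O) qvar ^+ h x * T k x.
Proof.
rewrite /T (reindex (fun p : P * k.-tuple P => [tuple of p.1 :: p.2])) /=; last first.
  exists (fun e => (thead e, behead_tuple e)) => [[x t] _|e _] /=.
    by congr pair; apply: val_inj.
  by rewrite [RHS](tuple_eta e).
symmetry; under eq_bigr => x _ do rewrite mulr_sumr.
rewrite pair_big_dep; apply: eq_big => [[x t]|[x t] _] /=.
  rewrite (path_sortedE ge_trans).
  apply/idP/idP.
    case/and3P => xy st ax; rewrite st xy /= andbT; apply/andP; split.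
      by apply/allP => w wt; have := allP ax w wt.
    by apply/allP => w wt; have := allP ax w wt; move=> wx; exact: le_trans wx xy.
  case/and3P => /andP [ax st] xy _; rewrite xy st /=.
  by apply/allP => w wt; have := allP ax w wt.
by rewrite big_cons exprD.
Qed.

Fixpoint Fq (n : nat) (y : P) : Qq :=
  match n with 0 => (y == \bot%O)%:R | n'.+1 => qvar ^+ h y * \sum_(z | (z <= y)%O) Fq n' z end.

Lemma sum_bot (y : P) : \sum_(z | (z <= y)%O) (z == \bot%O)%:R = 1 :> Qq.
Proof.
rewrite (bigD1 \bot%O) ?le0x //= eqxx big1 ?addr0 // => z /andP [_ /negbTE ->].
by [].
Qed.

Lemma F_T n y : Fq n.+1 y = qvar ^+ h y * T n y.
Proof.
elim: n y => [|n IH] y; first by rewrite /= sum_bot T0.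
rewrite [LHS]/= TS; congr (_ * _); apply: eq_bigr => z _; exact: IH.
Qed.


Lemma Wex y : exists W : {poly Qq}, [/\ (size W <= (h y).+1)%N,
   (forall n, W.[qvar ^+ n] = Fq n y) &
   W.[qvar^-1] = qvar ^- h \bot%O * (mobius \bot%O y)%:~R].
Proof.
have [m] := ubnP (dn y); elim: m y => [//|m IH] y Hy.
have : forall z, exists W : {poly Qq}, (z < y)%O -> [/\ (size W <= (h z).+1)%N,
   (forall n, W.[qvar ^+ n] = Fq n z) &
   W.[qvar^-1] = qvar ^- h \bot%O * (mobius \bot%O z)%:~R].
  move=> z; case: (boolP (z < y)%O) => zy; last by exists 0.
  have [|W HW] := IH z; last by exists W.
  by move: Hy; rewrite ltnS; apply: leq_trans (dn_lt zy).
case/fin_all_exists => Wf HW.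
pose G := \sum_(z | (z < y)%O) Wf z.
have sG : (size G <= h y)%N.
  apply: (big_ind (fun p : {poly Qq} => (size p <= h y)%N)).
  - by rewrite size_poly0.
  - by move=> p1 p2 s1 s2; rewrite (leq_trans (size_polyD _ _)) // geq_max s1 s2.
  - move=> z zy; have [s _ _] := HW z zy; exact: leq_trans s (h_lt zy).
have [W [sW W1 WS]] := solve (Fq 0 y) sG.
exists W; split => //.
- elim => [|n IHn]; first by rewrite expr0 W1.
  rewrite exprS WS IHn /G horner_sum /=.
  congr (_ * _); rewrite [RHS](bigD1 y) //=; congr (_ + _).
  apply: eq_big => [z|z zy]; first by rewrite lt_neqAle andbC.
  by have [_ -> _] := HW z zy.
have := WS (qvar^-1); rewrite mulfV ?q_neq0 // W1 /= /G horner_sum.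
have H3 : forall z, (z < y)%O ->
    (Wf z).[qvar^-1] = qvar ^- h \bot%O * (mobius \bot%O z)%:~R.
  by move=> z zy; case: (HW z zy).
rewrite (eq_bigr _ H3).
rewrite -mulr_sumr mobiusE le0x.
have qb0 : qvar ^+ h y != 0 by rewrite expf_neq0 ?q_neq0.
case: (eqVneq y \bot%O) => [ye|ne].
  rewrite ye big_pred0 => [|z]; last by rewrite ltx0.
  rewrite mulr0 addr0 mulr1 => E.
  have qb1 : qvar ^+ h \bot%O != 0 by rewrite expf_neq0 ?q_neq0.
  rewrite -(mulKf qb1 W.[qvar^-1]) -E. by rewrite mulr1.
move=> E.
have : W.[qvar^-1] + qvar ^- h \bot%O * \sum_(i | (i < y)%O) (mobius \bot%O i)%:~R = 0.
  by apply: (mulfI qb0); rewrite mulr0 -E.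
move/eqP; rewrite addr_eq0 => /eqP ->.
rewrite rmorphN rmorph_sum /= mulrN; congr (- (_ * _)).
by apply: eq_bigl => z; rewrite le0x.
Qed.

End Pos.
Unset Implicit Arguments. Set Strict Implicit. Set Printing Implicit Defensive.
Local Close Scope ring_scope.

Theorem mainTheorem14 (disp : Order.disp_t) (P : finTBPOrderType disp)
  (h : P -> nat) (hh : is_height h) :
  (exists Z : {poly Qq}, is_qZeta h Z) /\
  (forall Z : {poly Qq}, is_qZeta h Z ->
     (Z.[qint (-1)%R] =
       qvar ^ (- (h (\bot%O : P) + h (\top%O : P))%:Z)%R
         * (mobius (\bot%O : P) (\top%O : P))%:~R)%R).
Proof.
have [W [_ WF Wm]] := Wex hh \top%O.
pose Zh := (qvar ^- h \top%O *: (W \Po shiftp))%R.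
have ZhE : forall n, (2 <= n)%N -> Zh.[qint n%:Z]%R = multichain_sum h n.-1.
  move=> n n2; rewrite hornerZ horner_comp shiftp_nat WF multi_T.
  by case: n n2 => [//|n] _; rewrite F_T mulKf ?expf_neq0 ?q_neq0.
split; first by exists Zh => n n2; exact: ZhE.
move=> Z HZ.
have -> : Z = Zh.
  apply/eqP; rewrite -subr_eq0; apply/eqP; apply: poly_zero_on_qint => n n2.
  by rewrite hornerD hornerN HZ // ZhE // subrr.
rewrite hornerZ horner_comp shiftp_m1 Wm.
rewrite -exprnN exprD invfM.
ring.
Qed.
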